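(* Let $n \ge d \ge 1$ be integers. Let $R^{\mathrm{S}}\in\{0,+1,-1\}^{d\times n}$ be a random matrix produced by the S-SSE construction and $R^{\mathrm{SE}}\in\{0,+1,-1\}^{d\times n}$ a random matrix produced by the SE construction (both described in the context). Fix a row index $t\in[d]$, let $\mathbf{Y}$ be the number of nonzero entries in row $t$ of $R^{\mathrm{S}}$, and let $\mathbf{Z}$ be the number of nonzero entries in row $t$ of $R^{\mathrm{SE}}$. Then $$\mathbb{E}(\mathbf{Y})=\mathbb{E}(\mathbf{Z}),\qquad \operatorname{Var}(\mathbf{Y})\le \operatorname{Var}(\mathbf{Z}).$$
   Context: $[k]=\{1,\dots,k\}$. SE (sparse embedding) construction: choose independently for each column $i\in[n]$ a row label $h(i)$ uniformly at random from $[d]$ (i.e. uniform sampling with replacement), and independent Rademacher signs $\sigma_i\in\{+1,-1\}$ (each with probability $1/2$); set $R^{\mathrm{SE}}_{h(i),i}=\sigma_i$ and all other entries $0$. S-SSE (stable sparse subspace embedding) construction: form the multiset $D$ consisting of $[d]$ repeated $\lceil n/d\rceil$ times; draw $n$ elements from $D$ uniformly at random without replacement, giving a sequence $\mathcal{S}=(\mathcal{S}(1),\dots,\mathcal{S}(n))$; independently choose Rademacher signs $\sigma_i\in\{+1,-1\}$ with probability $1/2$ each; set $R^{\mathrm{S}}_{\mathcal{S}(i),i}=\sigma_i$ for $i\in[n]$ and all other entries $0$. In both constructions each column has exactly one nonzero entry. *)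

(* Defs.v *)
From HB Require Import structures.
From mathcomp Require Import all_boot all_order all_algebra.
Set Implicit Arguments. Unset Strict Implicit. Unset Printing Implicit Defensive.
Import Order.TTheory GRing.Theory Num.Theory.
Local Open Scope ring_scope.

Definition unifE {T : finType} {R : realFieldType} (A : {set T}) (X : T -> R) : R :=
  (\sum_(w in A) X w) / (#|A|%:R).

Definition unifVar {T : finType} {R : realFieldType} (A : {set T}) (X : T -> R) : R :=
  unifE A (fun w => (X w - unifE A X) ^+ 2).

Definition sgn (b : bool) : int := if b then 1 else -1.

(* ---------------- SE construction ----------------
   Outcome: (h, sigma) with h : [n] -> [d] (independent uniform labels)
   and sigma : [n] -> {+1,-1}; uniform on all such pairs. *)
Notation SE_space n d :=
  ({ffun 'I_n -> 'I_d} * {ffun 'I_n -> bool})%type.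

Definition SE_outcomes (n d : nat) : {set SE_space n d} := setT.

Definition R_SE (n d : nat) (w : SE_space n d) : 'M[int]_(d, n) :=
  \matrix_(j < d, i < n) (if w.1 i == j then sgn (w.2 i) else 0).

(* ---------------- S-SSE construction ----------------
   The multiset D = [d] repeated m = ceil(n/d) times is represented by the
   set of (distinguishable) positions 'I_m * 'I_d, the position (k, j)
   carrying the label j.  Drawing n elements uniformly without replacement,
   in order, is a uniformly random injection f : [n] -> positions; then
   S(i) = label of f(i). *)
Definition ceil_div (n d : nat) : nat := (n + d.-1) %/ d.

Notation SSSE_space n d :=
  ({ffun 'I_n -> ('I_(ceil_div n d) * 'I_d)} * {ffun 'I_n -> bool})%type.

Definition SSSE_outcomes (n d : nat) : {set SSSE_space n d} :=
  [set w : SSSE_space n d | injectiveb w.1].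

Definition R_S (n d : nat) (w : SSSE_space n d) : 'M[int]_(d, n) :=
  \matrix_(j < d, i < n) (if (w.1 i).2 == j then sgn (w.2 i) else 0).

Definition nnz_row (d n : nat) (M : 'M[int]_(d, n)) (t : 'I_d) : nat :=
  #|[set i : 'I_n | M t i != 0]|.

(* Main.v *)
Require Import Defs.
From HB Require Import structures.
From mathcomp Require Import all_boot all_order all_algebra.
From mathcomp Require Import perm ring lra zify.
Set Implicit Arguments. Unset Strict Implicit. Unset Printing Implicit Defensive.
Import Order.TTheory GRing.Theory Num.Theory.

Section Core.
Variables (T : finType) (n : nat) (A : {set {ffun 'I_n -> T}}).
Hypothesis HA : forall (s : {perm T}) (f : {ffun 'I_n -> T}), ([ffun x => s (f x)] \in A) = (f \in A).

Definition mp (s : {perm T}) (f : {ffun 'I_n -> T}) : {ffun 'I_n -> T} :=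
  [ffun x => s (f x)].

Lemma mp_inj s : injective (mp s).
Proof.
move=> f g /ffunP H; apply/ffunP => x; move: (H x); rewrite !ffunE; exact: perm_inj.
Qed.

Definition c1 i p := \sum_(f in A) (f i == p).

Lemma c1_perm i p (s : {perm T}) : c1 i (s p) = c1 i p.
Proof.
rewrite /c1 (reindex_inj (@mp_inj s)) /=.
apply: eq_big => f; first by rewrite HA.
by move=> _; rewrite ffunE (inj_eq perm_inj).
Qed.

Lemma c1_const i p q : c1 i p = c1 i q.
Proof. by rewrite -(c1_perm i p (tperm p q)) tpermL. Qed.

Lemma sum_c1 i (G : T -> nat) : \sum_(f in A) G (f i) = \sum_p c1 i p * G p.
Proof.
rewrite /c1; under [RHS]eq_bigr => p _ do rewrite big_distrl /=.
rewrite exchange_big /=; apply: eq_bigr => f _.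
rewrite (bigD1 (f i)) //= eqxx mul1n big1 ?addn0 // => p.
by rewrite eq_sym => /negbTE ->.
Qed.

Lemma const_ex (F : T -> nat) : (forall p q, F p = F q) -> exists c, forall p, F p = c.
Proof.
move=> H; have [p0 _|h] := pickP (fun _ : T => true).
  by exists (F p0) => p; apply: H.
by exists 0%N => p; have := h p.
Qed.

Lemma single i (L : {pred T}) :
  exists c, #|A| = (c * #|T|)%N /\ \sum_(f in A) (f i \in L) = (c * #|L|)%N.
Proof.
have [c Hc] := const_ex (c1_const i); exists c; split.
  rewrite -sum1_card (sum_c1 i (fun=> 1%N)).
  under eq_bigr => p _ do rewrite Hc muln1.
  by rewrite sum_nat_const mulnC.
rewrite (sum_c1 i (fun p => nat_of_bool (p \in L))).
rewrite (bigID (fun p => p \in L)) /= [X in (_ + X)%N]big1 ?addn0; last first.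
  by move=> p /negbTE ->; rewrite muln0.
under eq_bigr => p -> do rewrite Hc muln1.
by rewrite sum_nat_const mulnC.
Qed.

Definition c2 i j p q := \sum_(f in A) ((f i == p) && (f j == q)).

Lemma c2_perm i j p q (s : {perm T}) : c2 i j (s p) (s q) = c2 i j p q.
Proof.
rewrite /c2 (reindex_inj (@mp_inj s)) /=.
apply: eq_big => f; first by rewrite HA.
by move=> _; rewrite !ffunE !(inj_eq perm_inj).
Qed.

Lemma sum_c2 i j (G : T -> T -> nat) :
  \sum_(f in A) G (f i) (f j) = \sum_p \sum_q c2 i j p q * G p q.
Proof.
rewrite /c2; under [RHS]eq_bigr => p _ do under eq_bigr => q _ do rewrite big_distrl /=.
under [RHS]eq_bigr => p _ do rewrite exchange_big /=.
rewrite exchange_big /=; apply: eq_bigr => f _.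
rewrite (bigD1 (f i)) //= [X in (_ + X)%N]big1 ?addn0; last first.
  move=> p Hp; apply: big1 => q _.
  by rewrite eq_sym (negbTE Hp).
rewrite (bigD1 (f j)) //= !eqxx mul1n [X in (_ + X)%N]big1 ?addn0 // => q Hq.
by rewrite [f j == q]eq_sym (negbTE Hq) andbF.
Qed.


Lemma sumb_card (L : {pred T}) : \sum_p (p \in L) = #|L|.
Proof. by rewrite -sum1_card [RHS]big_mkcond; apply: eq_bigr => p _; case: (p \in L). Qed.

Lemma sumb_cardD1 (L : {pred T}) p : p \in L -> \sum_(q | q != p) (q \in L) = #|L|.-1.
Proof.
move=> pL; rewrite (cardD1 p L) pL add1n /= -sum1_card.
rewrite big_mkcond [RHS]big_mkcond /=; apply: eq_bigr => q _.
by rewrite !inE; case: (q != p); case: (q \in L).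
Qed.

Lemma sum1_C1 (p : T) : \sum_(q | q != p) 1 = #|T|.-1.
Proof. by rewrite -(cardC1 p) -sum1_card; apply: eq_bigl. Qed.

Section Inj.
Hypothesis HAinj : forall f, f \in A -> injective f.
Variables (i j : 'I_n).
Hypothesis ij : i != j.

Lemma c2_diag p : c2 i j p p = 0%N.
Proof.
apply: big1 => f fA; case/boolP: ((f i == p) && (f j == p)) => // /andP [/eqP e1 /eqP e2].
by move: ij; rewrite -(inj_eq (HAinj fA)) e1 e2 eqxx.
Qed.

Lemma c2_off p q p' q' : p != q -> p' != q' -> c2 i j p q = c2 i j p' q'.
Proof.
move=> pq pq'.
rewrite -(c2_perm i j p q (tperm p p')) tpermL.
set r := tperm p p' q.
have rp : r != p' by rewrite /r -{2}(tpermL p p') (inj_eq perm_inj) eq_sym.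
rewrite -(c2_perm i j p' r (tperm r q')) tpermL tpermD //; by rewrite eq_sym.
Qed.

Lemma pair_inj (L : {pred T}) : exists b,
  #|A| = (b * (#|T| * #|T|.-1))%N /\
  \sum_(f in A) ((f i \in L) && (f j \in L)) = (b * (#|L| * #|L|.-1))%N.
Proof.
have [b Hb] : exists b, forall p q, p != q -> c2 i j p q = b.
  have [[p0 q0] /= H0|h] := pickP (fun pq : T * T => pq.1 != pq.2).
    by exists (c2 i j p0 q0) => p q pq; apply: c2_off.
  by exists 0%N => p q pq; have := h (p, q); rewrite /= pq.
have gen : forall G : T -> T -> nat,
    \sum_(f in A) G (f i) (f j) = (b * \sum_p \sum_(q | q != p) G p q)%N.
  move=> G; rewrite sum_c2 big_distrr /=; apply: eq_bigr => p _.
  rewrite (bigD1 p) //= c2_diag mul0n add0n big_distrr /=.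
  by apply: eq_bigr => q qp; rewrite Hb // eq_sym.
exists b; split.
  rewrite -sum1_card (gen (fun _ _ => 1%N)).
  under eq_bigr => p _ do rewrite sum1_C1.
  by rewrite sum_nat_const.
rewrite (gen (fun p q => nat_of_bool ((p \in L) && (q \in L)))).
congr (_ * _)%N.
rewrite (bigID (fun p => p \in L)) /= [X in (_ + X)%N]big1 ?addn0; last first.
  by move=> p /negbTE pL; apply: big1 => q _; rewrite pL.
rewrite (eq_bigr (fun _ => #|L|.-1)); last first.
  by move=> p pL; rewrite -(sumb_cardD1 pL); apply: eq_bigr => q _; rewrite pL.
by rewrite sum_nat_const.
Qed.
End Inj.

Section Full.
Hypothesis HT : A = setT.
Variables (i j : 'I_n).
Hypothesis ij : i != j.

Definition hj p q (f : {ffun 'I_n -> T}) : {ffun 'I_n -> T} :=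
  [ffun x => if x == j then tperm p q (f x) else f x].

Lemma hjK p q : involutive (hj p q).
Proof. by move=> f; apply/ffunP => x; rewrite !ffunE; case: (x == j); rewrite ?tpermK. Qed.

Lemma c2_full p q : c2 i j p q = c2 i j p p.
Proof.
rewrite /c2 HT (reindex_inj (inv_inj (@hjK p q))) /=.
apply: eq_big => f; first by rewrite !inE.
move=> _; rewrite !ffunE (negbTE ij) eqxx.
suff -> : (tperm p q (f j) == q) = (f j == p) by [].
by rewrite -{2}(tpermL p q) (inj_eq perm_inj).
Qed.

Lemma pair_full (L : {pred T}) : exists c,
  #|A| = (c * (#|T| * #|T|))%N /\
  \sum_(f in A) ((f i \in L) && (f j \in L)) = (c * (#|L| * #|L|))%N.
Proof.
have [c Hc] : exists c, forall p q, c2 i j p q = c.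
  have [c Hc] : exists c, forall p, c2 i j p p = c.
    apply: (@const_ex (fun p => c2 i j p p)) => p q /=.
    by rewrite -(c2_perm i j p p (tperm p q)) tpermL.
  by exists c => p q; rewrite c2_full.
have gen : forall G : T -> T -> nat,
    \sum_(f in A) G (f i) (f j) = (c * \sum_p \sum_q G p q)%N.
  move=> G; rewrite sum_c2 big_distrr /=; apply: eq_bigr => p _.
  by rewrite big_distrr /=; apply: eq_bigr => q _; rewrite Hc.
exists c; split.
  rewrite -sum1_card (gen (fun _ _ => 1%N)).
  under eq_bigr => p _ do rewrite sum_nat_const.
  by rewrite sum_nat_const muln1 cardT.
rewrite (gen (fun p q => nat_of_bool ((p \in L) && (q \in L)))).
congr (_ * _)%N.
under eq_bigr => p _ do under eq_bigr => q _ do rewrite -mulnb.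
rewrite -big_distrlr /=.
by rewrite !sumb_card.
Qed.
End Full.

End Core.

Local Open Scope ring_scope.

Lemma unifE_ext (T : finType) (R : realFieldType) (A : {set T}) (X Y : T -> R) :
  X =1 Y -> unifE A X = unifE A Y.
Proof. by move=> H; rewrite /unifE; congr (_ / _); apply: eq_bigr => w _. Qed.

Lemma unifVarE (T : finType) (R : realFieldType) (A : {set T}) (X : T -> R) :
  #|A| != 0%N -> unifVar A X = unifE A (fun w => X w ^+ 2) - unifE A X ^+ 2.
Proof.
move=> A0; rewrite /unifVar /unifE.
set N := (#|A|%:R : R).
have HN : N != 0 by rewrite pnatr_eq0.
 set mu := (\sum_(w in A) X w) / N.
under eq_bigr => w _ do rewrite sqrrB.
rewrite big_split /= sumrB sumr_const sumrMnl -mulr_suml.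
rewrite -[_ *+ 2]mulr_natr -[_ *+ #|A|]mulr_natr -/N /mu.
move: (\sum_(i in A) X i ^+ 2) (\sum_(i in A) X i) => S2 S1.
clear mu; move: N HN => N HN.
by field.
Qed.

Lemma sqr_sum_nat n (b : 'I_n -> bool) :
  ((\sum_i b i) ^ 2 = \sum_i \sum_j (b i && b j))%N.
Proof.
rewrite expnS expn1 big_distrlr /=; apply: eq_bigr => i _; apply: eq_bigr => j _.
by rewrite mulnb.
Qed.

Lemma sumr_C1 (R : realFieldType) n (i : 'I_n) (c : R) :
  \sum_(j | j != i) c = c *+ n.-1.
Proof.
by rewrite -[in RHS](card_ord n) -(cardC1 i) -sumr_const; apply: eq_bigl => j; rewrite inE.
Qed.

Lemma sumr_ord (R : realFieldType) n (c : R) : \sum_(i < n) c = c *+ n.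
Proof. by rewrite -[in RHS](card_ord n) -sumr_const; apply: eq_bigl. Qed.

Lemma moments (R : realFieldType) (T : finType) n (A : {set {ffun 'I_n -> T}})
  (L : {pred T}) (k r : R) :
  #|A| != 0%N ->
  (forall i, (\sum_(f in A) (f i \in L))%:R = k * #|A|%:R) ->
  (forall i j, i != j ->
     (\sum_(f in A) ((f i \in L) && (f j \in L)))%:R = r * #|A|%:R) ->
  let X := fun f : {ffun 'I_n -> T} => (\sum_i (f i \in L))%:R : R in
  unifE A X = n%:R * k /\
  unifVar A X = n%:R * k + n%:R * n.-1%:R * r - (n%:R * k) ^+ 2.
Proof.
move=> A0 H1 H2 X.
have HN : (#|A|%:R : R) != 0 by rewrite pnatr_eq0.
have E1 : \sum_(f in A) X f = n%:R * k * #|A|%:R.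
  rewrite /X -natr_sum exchange_big natr_sum /=.
  under eq_bigr => i _ do rewrite H1.
  by rewrite sumr_ord -[k * _ *+ n]mulr_natl mulrA.
have E2 : \sum_(f in A) X f ^+ 2 = (n%:R * k + n%:R * n.-1%:R * r) * #|A|%:R.
  rewrite /X.
  under eq_bigr => f _ do rewrite -natrX sqr_sum_nat.
  rewrite -natr_sum exchange_big /=.
  under eq_bigr => i _ do rewrite exchange_big /=.
  rewrite natr_sum /=.
  rewrite (eq_bigr (fun i => k * #|A|%:R + (r * #|A|%:R) *+ n.-1)); last first.
    move=> i _; rewrite natr_sum (bigD1 i) //=; congr (_ + _).
      by under eq_bigr => f _ do rewrite andbb; exact: H1.
    by rewrite -(sumr_C1 i); apply: eq_bigr => j ji; apply: H2; rewrite eq_sym.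
  rewrite sumr_ord -[_ *+ n]mulr_natl -[_ *+ n.-1]mulr_natl.
  by rewrite mulrDr mulrDl !mulrA.
have EE : unifE A X = n%:R * k by rewrite /unifE E1 mulfK.
split => //.
rewrite unifVarE // EE /unifE E2 mulfK //.
Qed.

Lemma ratio (R : realFieldType) (a b c x y : nat) :
  a = (c * x)%N -> b = (c * y)%N -> a != 0%N -> (b%:R : R) = y%:R / x%:R * a%:R.
Proof.
move=> -> -> a0.
have c0 : (c%:R : R) != 0 by rewrite pnatr_eq0; apply: contraNneq a0 => ->.
have x0 : (x%:R : R) != 0 by rewrite pnatr_eq0; apply: contraNneq a0 => ->; rewrite muln0.
rewrite !natrM; by field.
Qed.

Lemma sum_fst (R : realFieldType) (T1 T2 : finType) (P : pred T1) (S : {set T1 * T2})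
  (HS : forall w, (w \in S) = P w.1) (F : T1 -> R) :
  \sum_(w in S) F w.1 = (\sum_(x in [set x | P x]) F x) *+ #|T2|.
Proof.
rewrite (eq_bigl (fun w => P w.1 && predT w.2)); last by move=> w; rewrite HS andbT.
rewrite -(pair_big_dep P (fun _ => predT) (fun a _ => F a)) /= -sumrMnl.
apply: eq_big => [x|x _]; first by rewrite inE.
by rewrite sumr_const cardT -cardE.
Qed.

Lemma unifE_fst (R : realFieldType) (T1 T2 : finType) (P : pred T1) (S : {set T1 * T2})
  (HS : forall w, (w \in S) = P w.1) (X : T1 -> R) : (0 < #|T2|)%N ->
  unifE S (fun w => X w.1) = unifE [set x | P x] X.
Proof.
move=> T20; rewrite /unifE (sum_fst HS).
have -> : (#|S|%:R : R) = #|[set x | P x]|%:R *+ #|T2|.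
  by have := sum_fst HS (fun _ => (1:R)); rewrite !sumr_const.
have c0 : (#|T2|%:R : R) != 0 by rewrite pnatr_eq0 -lt0n.
rewrite -[(\sum_(x in _) X x) *+ _]mulr_natr -[_%:R *+ #|T2|]mulr_natr.
by rewrite -mulf_div divff // mulr1.
Qed.

Lemma unifVar_fst (R : realFieldType) (T1 T2 : finType) (P : pred T1) (S : {set T1 * T2})
  (HS : forall w, (w \in S) = P w.1) (X : T1 -> R) : (0 < #|T2|)%N ->
  unifVar S (fun w => X w.1) = unifVar [set x | P x] X.
Proof.
move=> T20; rewrite /unifVar (unifE_fst HS X T20).
exact: (unifE_fst HS (fun x => (X x - unifE [set x | P x] X) ^+ 2) T20).
Qed.

Lemma card_set_sum (T : finType) (b : pred T) : #|[set i | b i]| = (\sum_i b i)%N.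
Proof.
by rewrite -sum1_card big_mkcond; apply: eq_bigr => i _; rewrite inE; case: (b i).
Qed.

Lemma sgn_neq0 b : sgn b != 0.
Proof. by case: b. Qed.

Lemma unifVar_ext (T : finType) (R : realFieldType) (A : {set T}) (X Y : T -> R) :
  X =1 Y -> unifVar A X = unifVar A Y.
Proof. by move=> H; rewrite /unifVar (unifE_ext A H); apply: unifE_ext => w; rewrite H. Qed.

Theorem theorem1 (R : realFieldType) (n d : nat) (hd : (1 <= d)%N) (hdn : (d <= n)%N)
    (t : 'I_d) :
  let Y := fun w : SSSE_space n d => (nnz_row (R_S w) t)%:R : R in
  let Z := fun w : SE_space n d => (nnz_row (R_SE w) t)%:R : R in
  unifE (SSSE_outcomes n d) Y = unifE (SE_outcomes n d) Z /\
  unifVar (SSSE_outcomes n d) Y <= unifVar (SE_outcomes n d) Z.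
Proof.
move=> Y Z.
set m := ceil_div n d.
have hmd : (n <= m * d)%N.
  rewrite /m /ceil_div; have := divn_eq (n + d.-1) d; have := ltn_pmod (n + d.-1) hd.
  nia.
have m0 : (0 < m)%N by nia.
have sg0 : (0 < #|{ffun 'I_n -> bool}|)%N by apply/card_gt0P; exists [ffun=> true].
pose TS : finType := ('I_m * 'I_d)%type.
pose AS := [set f : {ffun 'I_n -> TS} | injectiveb f].
pose LS := [pred x : TS | x.2 == t].
pose XS := fun f : {ffun 'I_n -> TS} => ((\sum_i (f i \in LS))%:R : R).
have cTS : #|TS| = (m * d)%N by rewrite card_prod !card_ord.
have cLS : #|LS| = m.
  have E : LS =i setX [set: 'I_m] [set t] by move=> x; rewrite !inE.
  by rewrite (eq_card E) cardsX cardsT card_ord cards1 muln1.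
have HY : forall w, Y w = XS w.1.
  move=> w; rewrite /Y /XS /nnz_row; congr (_%:R).
  have -> : [set i | R_S w t i != 0] = [set i | w.1 i \in LS].
    apply/setP => i; rewrite !inE mxE.
    by case: ((w.1 i).2 == t); rewrite ?sgn_neq0 ?eqxx.
  exact: card_set_sum.
have HSS : forall w : SSSE_space n d, (w \in SSSE_outcomes n d) = injectiveb w.1.
  by move=> w; rewrite inE.
have HAS : forall (s : {perm TS}) (f : {ffun 'I_n -> TS}),
    ([ffun x => s (f x)] \in AS) = (f \in AS).
  move=> s f; rewrite !inE; apply/injectiveP/injectiveP => H x y.
    by move=> e; apply: H; rewrite !ffunE e.
  by rewrite !ffunE => /perm_inj; apply: H.
have HASinj : forall f, f \in AS -> injective f by move=> f; rewrite inE => /injectiveP.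
have AS0 : #|AS| != 0%N.
  have hc : (n <= #|TS|)%N by rewrite cTS.
  pose f0 := [ffun i : 'I_n => enum_val (widen_ord hc i)].
  apply/eqP => /card0_eq/(_ f0); rewrite !inE => /negP; apply; apply/injectiveP.
  move=> x y; rewrite !ffunE => /enum_val_inj/(congr1 val) /= e; exact: val_inj.
have [ES VS] := @moments R TS n AS LS (#|LS|%:R / #|TS|%:R)
   ((#|LS| * #|LS|.-1)%:R / (#|TS| * #|TS|.-1)%:R) AS0
   (fun i => let: ex_intro c (conj E1 E2) := single HAS i LS in @ratio R _ _ _ _ _ E1 E2 AS0)
   (fun i j ij => let: ex_intro c (conj E1 E2) := pair_inj HAS HASinj ij LS in
      @ratio R _ _ _ _ _ E1 E2 AS0).
pose AE := [set f : {ffun 'I_n -> 'I_d} | true].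
pose LE := pred1 t.
pose XE := fun f : {ffun 'I_n -> 'I_d} => ((\sum_i (f i \in LE))%:R : R).
have HZ : forall w, Z w = XE w.1.
  move=> w; rewrite /Z /XE /nnz_row; congr (_%:R).
  have -> : [set i | R_SE w t i != 0] = [set i | w.1 i \in LE].
    apply/setP => i; rewrite !inE mxE.
    by case: (w.1 i == t); rewrite ?sgn_neq0 ?eqxx.
  exact: card_set_sum.
have HSE : forall w : SE_space n d, (w \in SE_outcomes n d) = (fun _ => true) w.1.
  by move=> w; rewrite inE.
have HAE : forall (s : {perm 'I_d}) (f : {ffun 'I_n -> 'I_d}),
    ([ffun x => s (f x)] \in AE) = (f \in AE) by move=> s f; rewrite !inE.
have HT : AE = setT by apply/setP => x; rewrite !inE.
have AE0 : #|AE| != 0%N.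
  by apply/eqP => /card0_eq/(_ [ffun=> t]); rewrite !inE.
have [EE VE] := @moments R 'I_d n AE LE (#|LE|%:R / #|'I_d|%:R)
   ((#|LE| * #|LE|)%:R / (#|'I_d| * #|'I_d|)%:R) AE0
   (fun i => let: ex_intro c (conj E1 E2) := single HAE i LE in @ratio R _ _ _ _ _ E1 E2 AE0)
   (fun i j ij => let: ex_intro c (conj E1 E2) := pair_full HAE HT ij LE in
      @ratio R _ _ _ _ _ E1 E2 AE0).
rewrite (unifE_ext _ HY) (unifE_ext _ HZ) (unifVar_ext _ HY) (unifVar_ext _ HZ).
rewrite (@unifE_fst R _ _ (fun f : {ffun 'I_n -> TS} => injectiveb f) _ HSS XS sg0).
rewrite (@unifE_fst R _ _ (fun _ : {ffun 'I_n -> 'I_d} => true) _ HSE XE sg0).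
rewrite (@unifVar_fst R _ _ (fun f : {ffun 'I_n -> TS} => injectiveb f) _ HSS XS sg0).
rewrite (@unifVar_fst R _ _ (fun _ : {ffun 'I_n -> 'I_d} => true) _ HSE XE sg0).
have kE : #|LS|%:R / #|TS|%:R = #|LE|%:R / #|'I_d|%:R :> R.
  rewrite cTS cLS card1 card_ord natrM.
  have m0' : (m%:R : R) != 0 by rewrite pnatr_eq0 -lt0n.
  have d0' : (d%:R : R) != 0 by rewrite pnatr_eq0 -lt0n.
  by rewrite invfM mulrA divff // !mul1r.
split; first by rewrite ES EE kE.
rewrite VS VE kE lerD2r lerD2l; apply: ler_wpM2l; first by rewrite mulr_ge0.
rewrite cTS cLS card1 card_ord.
have [D0|D0] := eqVneq (m * d * (m * d).-1)%N 0%N.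
  by rewrite D0 invr0 mulr0 divr_ge0.
have d2 : (0 < d * d)%N by nia.
have d2' : (d * d)%N != 0%N by rewrite -lt0n.
rewrite ler_pdivlMr ?ltr0n ?lt0n // mulrAC ler_pdivrMr ?ltr0n ?lt0n // mul1r -!natrM ler_nat.
nia.
Qed.
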